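(* For all positive integers $n$ and $k$, $$\sum_{r=1}^{k}(-1)^{k-r}\sum_{\substack{k_1+k_2+\cdots+k_r=k\\ k_i\geq 1}}\ \prod_{i=1}^{r}\binom{n}{k_i}=\binom{n+k-1}{k},$$ where the inner sum runs over all ordered $r$-tuples $(k_1,\dots,k_r)$ of positive integers with sum $k$ (i.e., over all compositions of $k$ into $r$ parts).
   Context: Binomial coefficients $\binom{m}{j}$ for nonnegative integers $m$ and $j$ are the usual ones, with $\binom{m}{j}=0$ when $j>m$. *)

(* Defs.v *)
From mathcomp Require Import all_boot all_order all_algebra.
Set Implicit Arguments. Unset Strict Implicit. Unset Printing Implicit Defensive.
Import GRing.Theory Num.Theory.

(* A composition of k into r parts: an r-tuple (k_1,...,k_r) of positive integers
   with sum k.  Each part is <= k, so we encode parts as elements of 'I_k.+1. *)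
Definition is_composition (k r : nat) (c : {ffun 'I_r -> 'I_k.+1}) : bool :=
  [forall i, 0 < (c i : nat)] && ((\sum_(i < r) (c i : nat))%N == k).

(* Main.v *)
Require Import Defs.
From mathcomp Require Import all_boot all_order all_algebra.
From mathcomp Require Import zify ring.
Import GRing.Theory Num.Theory.
Local Open Scope ring_scope.

Lemma bump0 i : bump 0 i = i.+1. Proof. by rewrite /bump add1n. Qed.

Definition G (n : nat) (X : nat -> int) (k : nat) : int :=
  \sum_(j < k.+1) (-1) ^+ j * ('C(n, j))%:R * X (k - j)%N.

Lemma GA n X k : G n.+1 X k.+1 = G n X k.+1 - G n X k.
Proof.
rewrite /G big_ord_recl [X in _ = X - _]big_ord_recl /= !bin0.
under eq_bigr => i _ do rewrite bump0 binS natrD mulrDr mulrDl subSS.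
rewrite big_split /= -addrA -sumrN; congr (_ + _).
under [in RHS]eq_bigr => i _ do rewrite bump0 subSS.
congr (_ + _); apply: eq_bigr => i _; rewrite exprS !mulN1r !mulNr //.
Qed.

Lemma GB n Y Z k : (forall m, Y m.+1 = Y m + Z m.+1) -> Y 0%N = Z 0%N ->
  G n Y k.+1 = G n Y k + G n Z k.+1.
Proof.
move=> HY H0; rewrite /G big_ord_recr [X in _ = _ + X]big_ord_recr /= subnn H0.
rewrite addrA; congr (_ + _).
rewrite -big_split /=; apply: eq_bigr => i _.
rewrite subSn ?HY ?mulrDr //; exact: ltnSE (ltn_ord i).
Qed.

Definition Xp (p : nat) (m : nat) : int := ('C(p + m, m))%:R.

Lemma Gzero p k : G p.+1 (Xp p) k.+1 = 0.
Proof.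
elim: p => [|p IH].
  rewrite /G big_ord_recl big_ord_recl big1 /=.
    rewrite /Xp !add0n binn bin1 /= subn1 /= binn bump0.
    by rewrite bin0 expr0 expr1 !mulr1 addr0 subrr.
  move=> i _; rewrite !bump0 bin_small ?mulr0 ?mul0r //.
rewrite GA (@GB _ (Xp p.+1) (Xp p)).
- by rewrite [G _ (Xp p.+1) k + _]addrC addrK IH.
  move=> m; rewrite /Xp addnS binS natrD addrC addSnnS //.
by rewrite /Xp !bin0.
Qed.
Definition Sf (n K r m : nat) : int :=
  \sum_(c : {ffun 'I_r -> 'I_K} | [forall i, (0 < (c i : nat))%N] && ((\sum_(i < r) (c i : nat))%N == m))
     \prod_(i < r) ('C(n, c i))%:R.

Section S.
Variables (n K : nat).

Lemma Sf_small r m : (m < r)%N -> Sf n K r m = 0.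
Proof.
move=> mr; apply: big1 => c /andP [/forallP pos /eqP sm]; exfalso.
have : (\sum_(i < r) 1 <= \sum_(i < r) (c i : nat))%N by apply: leq_sum => i _; exact: pos.
rewrite sum1_card card_ord sm; lia.
Qed.

Lemma Sf0S m : Sf n K 0 m.+1 = 0.
Proof. by apply: big1 => c /andP [_]; rewrite big_ord0. Qed.

Lemma Sf00 : Sf n K 0 0 = 1.
Proof.
rewrite /Sf (eq_bigl xpredT); last first.
  by move=> c; rewrite big_ord0 eqxx andbT; apply/forallP => -[].
under eq_bigr do rewrite big_ord0.
by rewrite sumr_const card_ffun !card_ord expn0.
Qed.

Section Cons.
Variable r : nat.
Definition fcons (p : 'I_K * {ffun 'I_r -> 'I_K}) : {ffun 'I_r.+1 -> 'I_K} :=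
  [ffun i => if unlift ord0 i is Some j then p.2 j else p.1].
Definition fsplit (c : {ffun 'I_r.+1 -> 'I_K}) : 'I_K * {ffun 'I_r -> 'I_K} :=
  (c ord0, [ffun j => c (lift ord0 j)]).
Lemma fcons0 p : fcons p ord0 = p.1.
Proof. by rewrite ffunE unlift_none. Qed.
Lemma fconsS p j : fcons p (lift ord0 j) = p.2 j.
Proof. by rewrite ffunE liftK. Qed.
Lemma fsplitK : cancel fcons fsplit.
Proof. by move=> [x f]; rewrite /fsplit fcons0; congr (_, _); apply/ffunP => j; rewrite ffunE fconsS. Qed.
Lemma fconsK : cancel fsplit fcons.
Proof.
move=> c; apply/ffunP => i; rewrite ffunE.
by case: unliftP => [j ->|->] //=; rewrite ffunE.
Qed.
End Cons.

Lemma Sf_rec r m : Sf n K r.+1 m =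
  \sum_(x < K | (0 < x <= m)%N) ('C(n, x))%:R * Sf n K r (m - x).
Proof.
rewrite /Sf (reindex (@fcons r)); last by exists (@fsplit r) => c _; [apply: fsplitK|apply: fconsK].
under eq_bigr do rewrite big_ord_recl fcons0.
under eq_bigr do under eq_bigr do rewrite fconsS.
rewrite (eq_bigl (fun p : 'I_K * {ffun 'I_r -> 'I_K} => ((0 < p.1) && (p.1 <= m))%N &&
   ([forall i, (0 < (p.2 i : nat))%N] && ((\sum_(i < r) (p.2 i : nat))%N == (m - p.1)%N)))); last first.
  move=> [x f] /=; rewrite big_ord_recl fcons0.
  rewrite (eq_bigr (fun i => (f i : nat))) /=; last by move=> i _; rewrite fconsS.
  have -> : [forall i, (0 < fcons r (x, f) i)%N] = (0 < x)%N && [forall i, (0 < f i)%N].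
    apply/forallP/andP => [H|[H1 /forallP H2] i].
      split; first by have := H ord0; rewrite fcons0.
      by apply/forallP => j; have := H (lift ord0 j); rewrite fconsS.
    by case: (unliftP ord0 i) => [j ->|->]; rewrite ?fconsS ?fcons0.
  case: (leqP x m) => xm.
    rewrite andbT; case: (0 < x)%N => //=; case: [forall i, _] => //=.
    apply/eqP/eqP; lia.
  rewrite andbF /= andbC; case: (_ == m) / eqP => //; lia.
rewrite -(pair_big_dep (fun x : 'I_K => (0 < x <= m)%N)
  (fun (x : 'I_K) (c : {ffun 'I_r -> 'I_K}) => [forall i, (0 < (c i : nat))%N] && ((\sum_(i < r) (c i : nat))%N == (m - x)%N))
  (fun x c => ('C(n, x))%:R * \prod_(i < r) ('C(n, c i))%:R : int)) /=.
apply: eq_bigr => x _; rewrite big_distrr /=.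
by apply: eq_bigr.
Qed.
End S.

Section H.
Variables (n k : nat).
Definition h (m : nat) : int := \sum_(r < k.+1) (-1) ^+ r * Sf n k.+1 r m.

Lemma h0 : h 0 = 1.
Proof.
rewrite /h big_ord_recl Sf00 mulr1 big1 ?addr0 //.
by move=> i _; rewrite Sf_small ?mulr0.
Qed.

Lemma hrec m : (0 < m <= k)%N ->
  h m = - \sum_(x < k.+1 | (0 < x <= m)%N) ('C(n, x))%:R * h (m - x).
Proof.
case/andP => m0 mk.
rewrite /h big_ord_recl; case: m m0 mk => // m _ mk; rewrite Sf0S mulr0 add0r.
under eq_bigr do rewrite lift0 Sf_rec exprS mulN1r mulNr big_distrr.
rewrite sumrN; congr (- _).
rewrite exchange_big /=; apply: eq_bigr => x /andP [x0 xm].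
rewrite big_distrr /= [in RHS]big_ord_recr /= Sf_small ?mulr0 ?addr0; last lia.
apply: eq_bigr => r _; rewrite mulrCA //.
Qed.

Lemma signB j m : (j <= m)%N -> (-1) ^+ (m - j) = (-1) ^+ m * (-1) ^+ j :> int.
Proof.
move=> jm; rewrite -{2}(subnK jm) exprD -mulrA -expr2 sqrr_sign mulr1 //.
Qed.


Lemma hval p m : n = p.+1 -> (m <= k)%N -> h m = (-1) ^+ m * Xp p m.
Proof.
move=> np; elim/ltn_ind: m => -[_ _|m IH mk].
  by rewrite h0 /Xp addn0 bin0 expr0 mulr1.
rewrite hrec //.
have G0 := Gzero p m.
rewrite /G big_ord_recl /= subn0 expr0 bin0 !mul1r in G0.
rewrite (eq_bigr (fun x : 'I_k.+1 => 'C(n,x)%:R * ((-1)^+m.+1 * (-1)^+x * Xp p (m.+1 - x)))); last first.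
  move=> x /andP [x0 xm]; rewrite IH; [by rewrite signB|lia|lia].
have -> : \sum_(x < k.+1 | (0 < x <= m.+1)%N) 'C(n, x)%:R * ((-1) ^+ m.+1 * (-1) ^+ x * Xp p (m.+1 - x))
   = (-1) ^+ m.+1 * \sum_(j < m.+2 | (0 < j)%N) (-1) ^+ j * 'C(p.+1, j)%:R * Xp p (m.+1 - j).
  rewrite big_distrr /= (@big_ord_widen_cond _ _ _ m.+2 k.+1 (fun j => (0 < j)%N) (fun j => (-1) ^+ m.+1 * ((-1) ^+ j * 'C(p.+1, j)%:R * Xp p (m.+1 - j))) mk).
  apply: eq_big => x; first by rewrite ltnS.
  by move=> _; rewrite np; ring.
rewrite big_mkcond big_ord_recl /=.
under eq_bigr do rewrite bump0 /=.
have H' : Xp p m.+1 = - \sum_(i<m.+1) (-1)^+i.+1 * 'C(p.+1,i.+1)%:R * Xp p (m.+1 - i.+1).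
  by apply/eqP; rewrite -addr_eq0; apply/eqP; exact G0.
rewrite add0r H'.
by rewrite mulrN.
Qed.
End H.

Theorem theorem3 (n k : nat) (hn : (0 < n)%N) (hk : (0 < k)%N) :
  \sum_(1 <= r < k.+1)
     (-1) ^+ (k - r) *
     \sum_(c : {ffun 'I_r -> 'I_k.+1} | is_composition c)
        \prod_(i < r) ('C(n, c i))%:R
  = ('C(n + k - 1, k))%:R :> int.
Proof.
case: n hn => // p _.
have -> : (p.+1 + k - 1 = p + k)%N by lia.
transitivity ((-1) ^+ k * h p.+1 k k).
  rewrite /h big_ord_recl; case: k hk => // k _.
  rewrite Sf0S mulr0 add0r big_distrr big_add1 big_mkord /=.
  apply: eq_bigr => i _; rewrite bump0 mulrA -signB //.
rewrite (@hval p.+1 k p k) // mulrA -expr2 sqrr_sign mul1r /Xp //.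
Qed.
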